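(* Let $G$ be a graph, let $D$ be a minimum dominating set of $G$ and $\gamma=|D|$, and let $\nabla$ be an integer with $\nabla>\nabla_1^B(G)$. Let $$\hat D=\{v\in V(G): \text{for all } A\subseteq D\setminus\{v\} \text{ with } N(v)\subseteq N[A] \text{ we have } |A|>2\nabla-1\}$$ and $$D_1=\{v\in V(G): \text{for all } A\subseteq V(G)\setminus\{v\} \text{ with } N(v)\subseteq N[A] \text{ we have } |A|>2\nabla-1\}.$$ Then $D_1\subseteq\hat D$ and $|D_1\setminus D|\le\rho(G)\cdot\gamma$.
   Context: Graphs are finite, undirected and simple. $N(v)$ is the open neighbourhood of $v$, $N[v]=N(v)\cup\{v\}$, and $N[A]=\bigcup_{a\in A}N[a]$. A dominating set is a set $D$ with $N[D]=V(G)$. A graph $H$ is a $1$-shallow minor of $G$ if it is obtained from $G$ by deleting vertices and edges and contracting pairwise vertex-disjoint connected subgraphs of radius at most $1$. $\nabla_1^B(G)$ is the maximum of $|E(H)|/|V(H)|$ over all bipartite $1$-shallow minors $H$ of $G$. The Hall ratio $\rho(G)$ is $\max\{|V(H)|/\alpha(H): H\subseteq G\}$, where $\alpha(H)$ is the size of a largest independent set of $H$. *)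

(* Defs.v *)
From HB Require Import structures.
From mathcomp Require Import all_boot all_order all_algebra.
Set Implicit Arguments. Unset Strict Implicit. Unset Printing Implicit Defensive.
Import Order.TTheory GRing.Theory Num.Theory.

Section Graphs.
Variable T : finType.
Variable e : rel T.

Definition simple_graph := symmetric e /\ irreflexive e.

Definition Nopen (v : T) : {set T} := [set u | e v u].
Definition Nclosed (v : T) : {set T} := v |: Nopen v.
Definition NclosedS (A : {set T}) : {set T} := \bigcup_(a in A) Nclosed a.

Definition dominating (D : {set T}) : bool := NclosedS D == [set: T].

Definition min_dominating (D : {set T}) : Prop :=
  dominating D /\ forall D' : {set T}, dominating D' -> #|D| <= #|D'|.

(* H is a bipartite 1-shallow minor of G with vertex set 'I_k:
   branch sets B i (pairwise disjoint), each the vertex set of a connected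
   subgraph of radius <= 1 with centre c i (i.e. B i \subset N[c i]);
   edge relation F of H is symmetric, irreflexive, only joins branch sets
   that are joined by an edge of G, and H is 2-colourable. *)
Definition bip_1shallow_minor (k : nat) (B : 'I_k -> {set T}) (c : 'I_k -> T)
    (F : rel 'I_k) : Prop :=
  [/\ forall i, c i \in B i /\ B i \subset Nclosed (c i),
      forall i j, i != j -> [disjoint B i & B j],
      symmetric F /\ irreflexive F,
      forall i j, F i j -> exists x, exists y,
          [/\ x \in B i, y \in B j & e x y]
    & exists col : 'I_k -> bool, forall i j, F i j -> col i != col j].

Definition num_edges (k : nat) (F : rel 'I_k) : nat :=
  #|[set p : 'I_k * 'I_k | F p.1 p.2 && (p.1 < p.2)%N]|.

(* nabla1B_lt x  <->  nabla_1^B(G) < x, i.e. every (nonempty) bipartite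
   1-shallow minor H of G satisfies |E(H)|/|V(H)| < x. *)
Definition nabla1B_lt (x : rat) : Prop :=
  forall (k : nat) (B : 'I_k -> {set T}) (c : 'I_k -> T) (F : rel 'I_k),
    bip_1shallow_minor B c F -> (0 < k)%N ->
    ((num_edges F)%:R / k%:R < x)%R.

Definition alpha_sub (S : {set T}) (F : {set T * T}) : nat :=
  \max_(I : {set T} | (I \subset S) &&
        [forall x in I, forall y in I, (x, y) \notin F]) #|I|.

Definition subgraph_edges (S : {set T}) (F : {set T * T}) : bool :=
  [forall p in F, [&& p.1 \in S, p.2 \in S & e p.1 p.2]].

Definition hall_ratio : rat :=
  \big[Num.max/0%R]_(S : {set T} | S != set0)
    \big[Num.max/0%R]_(F : {set T * T} | subgraph_edges S F)
      ((#|S|%:R : rat) / (alpha_sub S F)%:R)%R.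

Definition Dhat (D : {set T}) (nabla : int) : {set T} :=
  [set v | [forall A : {set T},
     ((A \subset D :\ v) && (Nopen v \subset NclosedS A)) ==>
     (2 * nabla - 1 < (#|A|)%:Z)%R]].

Definition D1 (nabla : int) : {set T} :=
  [set v | [forall A : {set T},
     ((A \subset [set: T] :\ v) && (Nopen v \subset NclosedS A)) ==>
     (2 * nabla - 1 < (#|A|)%:Z)%R]].

End Graphs.

(* Main.v *)
Require Import Defs.
From HB Require Import structures.
From mathcomp Require Import all_boot all_order all_algebra.
From mathcomp Require Import zify.
Import Order.TTheory GRing.Theory Num.Theory.
Set Implicit Arguments. Unset Strict Implicit.

Lemma split_lshift m n (a:'I_m) : split (lshift n a) = inl a.
Proof. by rewrite -[lshift n a]/(unsplit (inl a)) unsplitK. Qed.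
Lemma split_rshift m n (a:'I_n) : split (rshift m a) = inr a.
Proof. by rewrite -[rshift m a]/(unsplit (inr a)) unsplitK. Qed.

Definition domf (T : finType) (e : rel T) (D : {set T}) (u : T) : T :=
  odflt u [pick a in D | u \in Nclosed e a].
Definition Bd (T : finType) (e : rel T) (D I : {set T}) (d : T) : {set T} :=
  d |: [set u | (u \notin D) && (u \notin I) && (domf e D u == d)].
Definition Bm (T : finType) (e : rel T) (D I : {set T}) (i : 'I_(#|I| + #|D|)) : {set T} :=
  match split i with inl a => [set enum_val a] | inr b => Bd e D I (enum_val b) end.
Definition cm (T : finType) (D I : {set T}) (i : 'I_(#|I| + #|D|)) : T :=
  match split i with inl a => enum_val a | inr b => enum_val b end.
Definition Fm (T : finType) (e : rel T) (D I : {set T}) (i j : 'I_(#|I| + #|D|)) : bool :=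
  match split i, split j with
  | inl a, inr b => [exists x in Bd e D I (enum_val b), e (enum_val a) x]
  | inr b, inl a => [exists x in Bd e D I (enum_val b), e (enum_val a) x]
  | _, _ => false end.

Arguments cm {T} D I i.
Arguments Bm {T} e D I i.
Arguments Fm {T} e D I i j.

Lemma domP (T : finType) (e : rel T) (D : {set T}) u :
  dominating e D -> u \notin D -> domf e D u \in D /\ e (domf e D u) u.
Proof.
move=> domD uD; rewrite /domf; case: pickP => [a /andP [aD ua] | none] /=.
  split => //; move: ua; rewrite /Nclosed /Nopen !inE => /orP [/eqP ua|//].
  by subst; rewrite aD in uD.
exfalso; move/eqP: domD => /setP /(_ u); rewrite inE => /bigcupP [a aD ua].
by have := none a; rewrite aD ua.
Qed.

Lemma minor_ok (T : finType) (e : rel T) (D I : {set T}) :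
  simple_graph e -> dominating e D -> [disjoint I & D] ->
  bip_1shallow_minor e (Bm e D I) (cm D I) (Fm e D I).
Proof.
move=> [esym eirr] domD dID.
have vnD : forall a : 'I_#|I|, enum_val a \notin D.
  by move=> a; rewrite (disjointFr dID) ?enum_valP.
split.
- move=> i; rewrite /cm /Bm; case: (split i) => [a|b].
    by rewrite set11 sub1set /Nclosed setU11.
  rewrite /Bd setU11; split => //; apply/subsetP => u.
  rewrite /Nclosed /Nopen !inE => /orP [->//| /andP[/andP [uD _] /eqP du]].
  by rewrite -du; have [_ ->] := domP domD uD; rewrite orbT.
- move=> i j ij; rewrite -setI_eq0; apply/eqP/setP => x; rewrite !inE /Bm.
  case: (splitP i) => [a ia | b ib]; case: (splitP j) => [a' ja | b' jb].
  + have aa : a != a'.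
      by apply: contra ij => /eqP aa; apply/eqP/val_inj; rewrite /= ia ja aa.
    rewrite !inE; apply/negP => /andP [/eqP -> /eqP h].
    by move/eqP: aa; apply; apply: enum_val_inj.
  + rewrite /Bd !inE; apply/negP => /andP [/eqP -> /orP [/eqP h|/andP [/andP [_ h] _]]].
      by have := vnD a; rewrite h enum_valP.
    by rewrite enum_valP in h.
  + rewrite /Bd !inE; apply/negP => /andP [/orP [/eqP h|/andP [/andP [_ h] _]] /eqP h'].
      by have := vnD a'; rewrite -h' h enum_valP.
    by rewrite h' enum_valP in h.
  + have bb : b != b'.
      by apply: contra ij => /eqP bb; apply/eqP/val_inj; rewrite /= ib jb bb.
    have bb' : enum_val b != enum_val b' :> T.
      by apply: contra bb => /eqP h; apply/eqP; apply: enum_val_inj.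
    rewrite /Bd !inE; apply/negP => /andP [/orP [/eqP h|/andP [/andP [xD xI] /eqP h]]
                                        /orP [/eqP h'|/andP [/andP [xD' xI'] /eqP h']]].
    * by move: bb'; rewrite -h -h' eqxx.
    * by move: xD'; rewrite h enum_valP.
    * by move: xD; rewrite h' enum_valP.
    * by move: bb'; rewrite -h -h' eqxx.
- split.
    by move=> i j; rewrite /Fm; case: (split i); case: (split j).
  by move=> i; rewrite /Fm; case: (split i).
- move=> i j; rewrite /Fm /Bm; case: (split i) => [a|b]; case: (split j) => [a'|b'] //.
    move=> /existsP [x /andP [xB ex]]; exists (enum_val a), x; split => //.
    by rewrite set11.
  move=> /existsP [x /andP [xB ex]]; exists x, (enum_val a'); split => //.
    by rewrite set11.
  by rewrite esym.
- exists (fun i => if split i is inl _ then true else false).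
  by move=> i j; rewrite /Fm; case: (split i); case: (split j).
Qed.

Lemma mulz_natn (x : int) (m : nat) : (x * m%:Z = x *+ m)%R.
Proof. elim: m => [|m IH]; first by rewrite mulr0 mulr0n.
by rewrite mulrS -IH -addn1 PoszD mulrDr mulr1 addrC. Qed.

Lemma indep_le (T : finType) (e : rel T) (D I : {set T}) (nabla : int) :
  simple_graph e -> dominating e D -> nabla1B_lt e nabla%:~R ->
  I \subset D1 e nabla :\: D -> (forall x y, x \in I -> y \in I -> ~~ e x y) ->
  (#|I| <= #|D|)%N.
Proof.
move=> [esym eirr] domD hnab sI indI.
have [I0|/set0Pn [v0 v0I]] := eqVneq I set0; first by rewrite I0 cards0.
have npos : (0 < nabla)%R.
  have := hnab 1 (fun _ => [set v0]) (fun _ => v0) (fun _ _ => false).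
  have -> : num_edges (fun _ _ : 'I_1 => false) = 0%N.
    by rewrite /num_edges; apply/eqP; rewrite cards_eq0; apply/eqP/setP => p; rewrite !inE.
  rewrite mul0r ltr0z; apply => //; split.
  - by move=> i; rewrite set11 sub1set /Nclosed setU11.
  - by move=> i j; rewrite (ord1 i) (ord1 j) eqxx.
  - by [].
  - by [].
  - by exists (fun _ => true).
have dID : [disjoint I & D].
  rewrite -setI_eq0; apply/eqP/setP => x; rewrite !inE.
  apply/negP => /andP [xI xD]; move: (subsetP sI x xI); by rewrite inE xD.
set m := #|I|; set n := #|D|.
have mpos : (0 < m)%N by rewrite /m card_gt0; apply/set0Pn; exists v0.
have hE := hnab (m + n)%N _ _ _ (minor_ok (conj esym eirr) domD dID) (ltn_addr _ mpos).
set Pa := fun a : 'I_m => [set b : 'I_n | Fm e D I (lshift n a) (rshift m b)].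
have claim1 : forall a, (2 * nabla - 1 < (#|Pa a|)%:Z)%R.
  move=> a; set v := enum_val a.
  have vI : v \in I by exact: enum_valP.
  have := subsetP sI v vI; rewrite !inE => /andP [vnD /forallP hv].
  set Av := [set d in D | [exists x in Bd e D I d, e v x]].
  have hA := hv Av; move/implyP: hA => hA.
  have hc : (Av \subset [set: T] :\ v) && (Nopen e v \subset NclosedS e Av); last first.
    apply: lt_le_trans (hA hc) _; rewrite lez_nat.
    have sub : Av \subset [set enum_val b | b in Pa a].
      apply/subsetP => d; rewrite inE => /andP [dD hd].
      apply/imsetP; exists (enum_rank_in dD d); last by rewrite enum_rankK_in.
      by rewrite inE /Fm split_lshift split_rshift enum_rankK_in.
    exact: leq_trans (subset_leq_card sub) (leq_imset_card _ _).
  apply/andP; split.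
    apply/subsetP => d; rewrite !inE => /andP [dD _]; rewrite andbT.
    by apply: contraNneq vnD => <-.
  apply/subsetP => u; rewrite /Nopen inE => evu.
  case uD: (u \in D).
    apply/bigcupP; exists u; last by rewrite /Nclosed setU11.
    rewrite inE uD; apply/existsP; exists u; by rewrite /Bd setU11 evu.
  have [dD edu] := domP domD (negbT uD).
  apply/bigcupP; exists (domf e D u); last by rewrite /Nclosed /Nopen !inE edu orbT.
  rewrite inE dD /=; apply/existsP; exists u; rewrite evu andbT /Bd !inE uD /= eqxx andbT; apply/orP; right.
  by apply/negP => uI; move: (indI v u vI uI); rewrite evu.
have claim2 : (\sum_(a < m) #|Pa a| <= num_edges (Fm e D I))%N.
  set P := [set p : 'I_m * 'I_n | Fm e D I (lshift n p.1) (rshift m p.2)].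
  have -> : (\sum_(a < m) #|Pa a| = #|P|)%N.
    have cs : forall (J : finType) (A : {set J}), #|A| = (\sum_(j in A) 1)%N.
      by move=> J A; rewrite sum1_card.
    transitivity (\sum_(a < m) \sum_(b in Pa a) 1)%N.
      by apply: eq_bigr => a _; rewrite cs.
    rewrite pair_big_dep (cs _ P) /=; apply: eq_bigl => p; by rewrite !inE.
  have inj : injective (fun p : 'I_m * 'I_n => (lshift n p.1, rshift m p.2)).
    move=> [a b] [a' b'] /= h.
    by have /lshift_inj -> := congr1 fst h; have /rshift_inj -> := congr1 snd h.
  rewrite -(card_imset _ inj) /num_edges; apply: subset_leq_card.
  apply/subsetP => q /imsetP [p pP ->]; rewrite inE /=.
  move: pP; rewrite inE => -> /=; exact: ltn_addr (ltn_ord _).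
have hE' : ((num_edges (Fm e D I))%:Z < nabla * (m + n)%:Z)%R.
  rewrite ltr_pdivrMr ?ltr0n ?addn_gt0 ?mpos // in hE.
  rewrite -(ltr_int rat) intrM; exact: hE.
have hs : (2 * nabla * m%:Z <= (\sum_(a<m) #|Pa a|)%:Z)%R.
  rewrite -(natz (\sum_(a<m) #|Pa a|)) natr_sum.
  have -> : (2 * nabla * m%:Z = \sum_(a < m) (2 * nabla))%R.
    by rewrite sumr_const card_ord mulz_natn.
  apply: ler_sum => a _; rewrite natz; have := claim1 a; lia.
have c2 : ((\sum_(a<m) #|Pa a|)%:Z <= (num_edges (Fm e D I))%:Z)%R by rewrite lez_nat.
have : (m%:Z <= n%:Z)%R by nia.
by rewrite lez_nat.
Qed.

Theorem lemma4 (T : finType) (e : rel T) (D : {set T}) (nabla : int) :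
  simple_graph e ->
  min_dominating e D ->
  nabla1B_lt e (nabla%:~R) ->
  D1 e nabla \subset Dhat e D nabla /\
  ((#|D1 e nabla :\: D|)%:R <= hall_ratio e * (#|D|)%:R :> rat)%R.
Proof.
move=> sg [domD _] hnab; have [esym eirr] := sg.
split.
  apply/subsetP => v; rewrite !inE => /forallP h; apply/forallP => A.
  apply/implyP => /andP [AD NA]; apply: (implyP (h A)); rewrite NA andbT.
  by apply: subset_trans AD _; apply: setSD; apply: subsetT.
set S := D1 e nabla :\: D.
have hall0 : (0 <= hall_ratio e :> rat)%R.
  rewrite /hall_ratio; apply: (big_ind (fun x : rat => 0 <= x)%R) => //.
    by move=> x y hx hy; rewrite le_max hx.
  move=> S' _; apply: (big_ind (fun x : rat => 0 <= x)%R) => //.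
    by move=> x y hx hy; rewrite le_max hx.
  by move=> F' _; rewrite divr_ge0 // ler0n.
have [S0|/set0Pn [v0 v0S]] := eqVneq S set0.
  by rewrite S0 cards0 mulr_ge0 // ler0n.
set F := [set p : T * T | [&& p.1 \in S, p.2 \in S & e p.1 p.2]].
have sF : subgraph_edges e S F.
  by apply/forallP => p; apply/implyP; rewrite inE.
set al := alpha_sub S F.
have alD : (al <= #|D|)%N.
  apply/bigmax_leqP => I /andP [IS /forallP indep].
  apply: (indep_le sg domD hnab IS) => x y xI yI.
  have := indep x; rewrite xI /= => /forallP /(_ y); rewrite yI /= inE => h.
  by apply/negP => exy; move: h; rewrite (subsetP IS x xI) (subsetP IS y yI) exy.
have al1 : (1 <= al)%N.
  rewrite -(cards1 v0) /al /alpha_sub; apply: leq_bigmax_cond.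
  rewrite sub1set v0S /=; apply/forallP => x; apply/implyP; rewrite inE => /eqP ->.
  apply/forallP => y; apply/implyP; rewrite inE => /eqP ->.
  by rewrite inE eirr !andbF.
have hr : ((#|S|%:R / al%:R : rat) <= hall_ratio e)%R.
  rewrite /hall_ratio (bigD1 S) /=; last by apply/set0Pn; exists v0.
  rewrite le_max; apply/orP; left.
  by rewrite (bigD1 F) //= le_max lexx.
apply: le_trans (ler_wpM2r (ler0n _ _) hr).
have alpos : (0 < al%:R :> rat)%R by rewrite ltr0n.
rewrite mulrAC ler_pdivlMr //.
by rewrite ler_wpM2l ?ler0n // ler_nat.
Qed.
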